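(* Consider the two-route traffic model described in the context, under assumptions (A1)–(A6). Then the system is monotone: if $x_0,y_0\in\Omega$ satisfy $x_0\le y_0$ componentwise, then the corresponding solutions satisfy $x(t;x_0)\le x(t;y_0)$ componentwise for all $t\ge0$.
   Context: Two routes $i=1,2$ connect an origin to a destination. For each route there are positive parameters $B_i$, $C_i$, $F_i$ with $C_i<B_i$; the demand is a constant $\phi>0$. Set $v_i=F_i/C_i$ and $E_i=v_iB_i$. The state $x=(x_1,x_2)\in\Omega:=[0,B_1]\times[0,B_2]$ evolves by $\dot x_i=\min\{\phi R_i(x),S_i(x_i)\}-D_i(x_i)$, $i=1,2$, with $S_i(x_i)=F_i$ if $x_i<C_i$, $S_i(x_i)=\frac{F_i}{B_i-C_i}(B_i-x_i)$ otherwise; $D_i(x_i)=v_ix_i$ if $x_i<C_i$, $D_i(x_i)=F_i$ otherwise. Routing ratios: $R_i(x)=(1-\alpha)r_i^0+\alpha\, r_i(\tau(x))$, with $\alpha\in(0,1]$, $r_1^0,r_2^0\ge0$, $r_1^0+r_2^0=1$, $\tau(x)=(\tau_1(x_1),\tau_2(x_2))$, each $\tau_i$ $C^1$ and strictly increasing, $0\le r_i(\tau(x))\le1$, $r_1(\tau(x))+r_2(\tau(x))=1$ on $\Omega$, $x\mapsto r_i(\tau(x))$ globally Lipschitz and $C^1$ on $\Omega$. Assumptions: (A1) $\phi<F_1+F_2$; (A2)–(A3) as just listed; (A4) $\partial R_i/\partial\tau_j>0$ for $i\ne j$; (A5) $F_i>(1-\alpha)\phi r_i^0$; (A6) $\phi<E_i$,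 $i=1,2$. *)

(* Defs.v *)
From Stdlib Require Import Reals Lra.
From Coquelicot Require Import Coquelicot.
Open Scope R_scope.

Definition supply (F B C x : R) : R :=
  if Rlt_dec x C then F else F / (B - C) * (B - x).

Definition demand (F C x : R) : R :=
  if Rlt_dec x C then (F / C) * x else F.

Definition routing (alpha r0 : R) (r : R -> R -> R) (tau1 tau2 : R -> R)
  (x1 x2 : R) : R :=
  (1 - alpha) * r0 + alpha * r (tau1 x1) (tau2 x2).

Definition rhs (phi alpha r0 : R) (r : R -> R -> R) (tau1 tau2 : R -> R)
  (F B C : R) (x1 x2 xi : R) : R :=
  Rmin (phi * routing alpha r0 r tau1 tau2 x1 x2) (supply F B C xi)
  - demand F C xi.

Definition in_Omega (B1 B2 x1 x2 : R) : Prop :=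
  0 <= x1 <= B1 /\ 0 <= x2 <= B2.

Definition is_solution (B1 C1 F1 B2 C2 F2 phi alpha r01 r02 : R)
  (r1 r2 : R -> R -> R) (tau1 tau2 : R -> R)
  (a1 a2 : R) (x1 x2 : R -> R) : Prop :=
  x1 0 = a1 /\ x2 0 = a2 /\
  (forall t, 0 <= t -> in_Omega B1 B2 (x1 t) (x2 t)) /\
  filterlim x1 (at_right 0) (locally (x1 0)) /\
  filterlim x2 (at_right 0) (locally (x2 0)) /\
  (forall t, 0 < t ->
     is_derive x1 t (rhs phi alpha r01 r1 tau1 tau2 F1 B1 C1 (x1 t) (x2 t) (x1 t)) /\
     is_derive x2 t (rhs phi alpha r02 r2 tau1 tau2 F2 B2 C2 (x1 t) (x2 t) (x2 t))).

Definition C1_on_Omega (B1 B2 : R) (g : R -> R -> R) : Prop :=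
  exists d1 d2 : R -> R -> R,
    forall x1 x2, in_Omega B1 B2 x1 x2 ->
      is_derive (fun s => g s x2) x1 (d1 x1 x2) /\
      is_derive (fun s => g x1 s) x2 (d2 x1 x2) /\
      continuous (fun p : R * R => d1 (fst p) (snd p)) (x1, x2) /\
      continuous (fun p : R * R => d2 (fst p) (snd p)) (x1, x2).

Definition lipschitz_on_Omega (B1 B2 : R) (g : R -> R -> R) : Prop :=
  exists L, 0 <= L /\
    forall x1 x2 y1 y2, in_Omega B1 B2 x1 x2 -> in_Omega B1 B2 y1 y2 ->
      Rabs (g x1 x2 - g y1 y2) <= L * (Rabs (x1 - y1) + Rabs (x2 - y2)).

Definition C1_strict_incr (B : R) (tau : R -> R) : Prop :=
  (forall s, 0 <= s <= B -> ex_derive tau s /\ continuous (Derive tau) s) /\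
  (forall s u, 0 <= s <= B -> 0 <= u <= B -> s < u -> tau s < tau u).

(* Main.v *)
Require Import Defs.
From Stdlib Require Import Reals Lra Psatz.
From Coquelicot Require Import Coquelicot.
Open Scope R_scope.
From Stdlib Require Import Psatz.

Lemma ballR (y e z : R) : ball y e z -> Rabs (z - y) < e.
Proof. intro H; exact H. Qed.

Definition pp (z : R) := Rmax z 0.

Lemma hq_bound z h : Rabs (pp (z + h) * pp (z + h) - pp z * pp z - 2 * pp z * h) <= h * h.
Proof.
  unfold pp, Rmax.
  destruct (Rle_dec (z+h) 0); destruct (Rle_dec z 0); split_Rabs; nra.
Qed.

Lemma hq_derive z : is_derive (fun z => pp z * pp z) z (2 * pp z).
Proof.
  apply is_derive_Reals. intros eps Heps.
  exists (mkposreal eps Heps). intros h Hh Hlt. simpl in Hlt.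
  pose proof (hq_bound z h) as Hb.
  replace ((pp (z + h) * pp (z + h) - pp z * pp z) / h - 2 * pp z)
    with ((pp (z + h) * pp (z + h) - pp z * pp z - 2 * pp z * h) / h) by (field; auto).
  unfold Rdiv. rewrite Rabs_mult, Rabs_inv.
  apply Rle_lt_trans with (h*h * / Rabs h).
  - apply Rmult_le_compat_r; [left; apply Rinv_0_lt_compat; now apply Rabs_pos_lt|exact Hb].
  - replace (h*h) with (Rabs h * Rabs h) by (rewrite <- Rabs_mult; apply Rabs_pos_eq; nra).
    field_simplify; [lra| apply Rabs_no_R0; auto].
Qed.

Lemma Rmin_lip a b c d : Rabs (Rmin a b - Rmin c d) <= Rabs (a - c) + Rabs (b - d).
Proof. unfold Rmin; destruct (Rle_dec a b); destruct (Rle_dec c d); split_Rabs; lra. Qed.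

Lemma supply_lip F B C a b : 0 < F -> C < B ->
  Rabs (supply F B C a - supply F B C b) <= F / (B - C) * Rabs (a - b).
Proof.
  intros HF HCB. set (k := F / (B - C)).
  assert (Hk : 0 < k) by (unfold k; apply Rdiv_lt_0_compat; lra).
  assert (HFk : F = k * (B - C)) by (unfold k; field; lra).
  unfold supply; fold k.
  destruct (Rlt_dec a C); destruct (Rlt_dec b C); rewrite ?HFk; split_Rabs; nra.
Qed.

Lemma demand_lip F C a b : 0 < F -> 0 < C ->
  Rabs (demand F C a - demand F C b) <= F / C * Rabs (a - b).
Proof.
  intros HF HC. set (k := F / C).
  assert (Hk : 0 < k) by (unfold k; apply Rdiv_lt_0_compat; lra).
  assert (HFk : F = k * C) by (unfold k; field; lra).
  unfold demand; fold k.
  destruct (Rlt_dec a C); destruct (Rlt_dec b C); rewrite ?HFk; split_Rabs; nra.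
Qed.
Lemma Rmin_mono x y s : x <= y -> Rmin x s <= Rmin y s.
Proof. intro; unfold Rmin; destruct (Rle_dec x s); destruct (Rle_dec y s); lra. Qed.

Lemma key F B C phi alpha r0 (rho : R -> R -> R) Lr B' a a' o o' :
 0 < F -> 0 < C -> C < B -> 0 < phi -> 0 < alpha -> 0 <= Lr ->
 (forall a o o', 0 <= a <= B -> 0 <= o -> o <= o' -> o' <= B' -> rho a o <= rho a o') ->
 (forall a o a' o', 0 <= a <= B -> 0 <= o <= B' -> 0 <= a' <= B -> 0 <= o' <= B' ->
    Rabs (rho a o - rho a' o') <= Lr * (Rabs (a - a') + Rabs (o - o'))) ->
 0 <= a <= B -> 0 <= a' <= B -> 0 <= o <= B' -> 0 <= o' <= B' -> a' <= a ->
 Rmin (phi * ((1 - alpha) * r0 + alpha * rho a o)) (supply F B C a) - demand F C a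
 - (Rmin (phi * ((1 - alpha) * r0 + alpha * rho a' o')) (supply F B C a') - demand F C a')
 <= (phi * alpha * Lr + F / (B - C) + F / C) * ((a - a') + pp (o - o')).
Proof.
  intros HF HC HCB Hphi Hal HLr Hmono Hlip Ha Ha' Ho Ho' Haa.
  set (z := Rmax o o').
  assert (Hz : 0 <= z <= B') by (unfold z, Rmax; destruct (Rle_dec o o'); lra).
  assert (Hzo : z - o' = pp (o - o')) by (unfold z, pp, Rmax; destruct (Rle_dec o o'); destruct (Rle_dec (o - o') 0); lra).
  assert (Hpp : 0 <= pp (o - o')) by (unfold pp, Rmax; destruct (Rle_dec (o - o') 0); lra).
  assert (H1 : rho a o <= rho a z) by (apply Hmono; unfold z, Rmax in *; try destruct (Rle_dec o o'); lra).
  assert (H2 : Rmin (phi * ((1 - alpha) * r0 + alpha * rho a o)) (supply F B C a)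
            <= Rmin (phi * ((1 - alpha) * r0 + alpha * rho a z)) (supply F B C a)).
  { assert (phi * ((1 - alpha) * r0 + alpha * rho a o) <= phi * ((1 - alpha) * r0 + alpha * rho a z)).
    { assert (alpha * rho a o <= alpha * rho a z) by (apply Rmult_le_compat_l; lra).
      apply Rmult_le_compat_l; lra. }
    apply Rmin_mono; lra. }
  pose proof (Rmin_lip (phi * ((1 - alpha) * r0 + alpha * rho a z)) (supply F B C a)
     (phi * ((1 - alpha) * r0 + alpha * rho a' o')) (supply F B C a')) as H3.
  pose proof (Hlip a z a' o' Ha Hz Ha' Ho') as H4.
  pose proof (supply_lip F B C a a' HF HCB) as H5.
  pose proof (demand_lip F C a a' HF HC) as H6.
  replace (phi * ((1 - alpha) * r0 + alpha * rho a z) - phi * ((1 - alpha) * r0 + alpha * rho a' o'))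
    with ((phi * alpha) * (rho a z - rho a' o')) in H3 by ring.
  rewrite Rabs_mult, (Rabs_pos_eq (phi*alpha)) in H3 by nra.
  rewrite (Rabs_pos_eq (a - a')) in H4, H5, H6 by lra.
  rewrite (Rabs_pos_eq (z - o')) in H4 by lra.
  rewrite Hzo in H4.
  assert (Hk : 0 < F / (B - C)) by (apply Rdiv_lt_0_compat; lra).
  assert (Hv : 0 < F / C) by (apply Rdiv_lt_0_compat; lra).
  assert (H7 : phi * alpha * Rabs (rho a z - rho a' o') <= phi * alpha * (Lr * (a - a' + pp (o - o')))).
  { apply Rmult_le_compat_l; nra. }
  assert (H8 : - demand F C a + demand F C a' <= F / C * (a - a')) by (split_Rabs; lra).
  assert (H9 : Rmin (phi * ((1 - alpha) * r0 + alpha * rho a z)) (supply F B C a)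
       - Rmin (phi * ((1 - alpha) * r0 + alpha * rho a' o')) (supply F B C a') <=
       phi * alpha * (Lr * (a - a' + pp (o - o'))) + F / (B - C) * (a - a')) by (split_Rabs; lra).
  nra.
Qed.
Lemma cont_of_derive (f : R -> R) x : ex_derive f x -> continuity_pt f x.
Proof. intro H. apply continuity_pt_filterlim. exact (ex_derive_continuous f x H). Qed.

Lemma incr_from_deriv (G tau : R -> R) (B : R) :
  C1_strict_incr B tau ->
  (forall z, 0 <= z <= B -> exists d, is_derive G (tau z) d /\ 0 < d) ->
  forall o o', 0 <= o -> o <= o' -> o' <= B -> G (tau o) <= G (tau o').
Proof.
  intros [Hd Hinc] HG o o' H0 H1 H2.
  destruct (Req_dec o o') as [->|Hne]; [lra|].
  assert (Hlt : tau o < tau o') by (apply Hinc; lra).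
  assert (Hpre : forall s, tau o <= s <= tau o' -> exists z, o <= z <= o' /\ tau z = s).
  { intros s Hs.
    destruct (Req_dec s (tau o)) as [->|Hs1]; [exists o; lra|].
    destruct (Req_dec s (tau o')) as [->|Hs2]; [exists o'; lra|].
    destruct (Ranalysis5.IVT_interv (fun z => tau z - s) o o') as [z [Hz Hzs]].
    - intros a Ha. apply continuity_pt_minus; [|apply continuity_pt_const; intros ? ?; reflexivity].
      apply cont_of_derive. apply Hd. lra.
    - lra.
    - lra.
    - lra.
    - exists z. split; [lra|]. lra. }
  assert (HG' : forall s, tau o <= s <= tau o' -> is_derive G s (Derive G s) /\ 0 < Derive G s).
  { intros s Hs. destruct (Hpre s Hs) as [z [Hz <-]].
    destruct (HG z ltac:(lra)) as [d [Hdd Hdpos]].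
    rewrite (is_derive_unique _ _ _ Hdd). auto. }
  destruct (MVT_gen G (tau o) (tau o') (Derive G)) as [c [Hc Heq]].
  - intros x Hx. rewrite Rmin_left, Rmax_right in Hx by lra. apply HG'. lra.
  - intros x Hx. rewrite Rmin_left, Rmax_right in Hx by lra.
    apply cont_of_derive. eexists. apply (HG' x Hx).
  - rewrite Rmin_left, Rmax_right in Hc by lra.
    destruct (HG' c Hc) as [_ Hp]. nra.
Qed.

Lemma lemmaA (g : R -> R) :
  (forall t, 0 < t -> exists d, is_derive g t d /\ d <= 0) ->
  (forall eps, 0 < eps -> at_right 0 (fun s => g s < eps)) ->
  forall t, 0 < t -> g t <= 0.
Proof.
  intros Hd Hc t Ht.
  destruct (Rle_dec (g t) 0) as [|Hn]; [auto|exfalso].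
  destruct (Hc (g t) ltac:(lra)) as [eps Heps].
  set (s := Rmin (eps/2) (t/2)).
  assert (Hs0 : 0 < s) by (unfold s, Rmin; destruct (Rle_dec _ _); destruct eps; simpl in *; lra).
  assert (Hst : s < t) by (unfold s, Rmin; destruct (Rle_dec _ _); lra).
  assert (Hgs : g s < g t).
  { apply Heps; [|exact Hs0]. unfold ball; simpl; unfold AbsRing_ball, abs, minus, plus, opp; simpl.
    unfold s, Rmin; destruct (Rle_dec _ _); destruct eps; simpl in *; split_Rabs; lra. }
  assert (HD : forall x, s <= x <= t -> is_derive g x (Derive g x) /\ Derive g x <= 0).
  { intros x Hx. destruct (Hd x ltac:(lra)) as [d [Hdd Hdn]].
    rewrite (is_derive_unique _ _ _ Hdd). auto. }
  destruct (MVT_gen g s t (Derive g)) as [c [Hc' Heq]].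
  - intros x Hx. rewrite Rmin_left, Rmax_right in Hx by lra. apply HD. lra.
  - intros x Hx. rewrite Rmin_left, Rmax_right in Hx by lra.
    apply cont_of_derive. eexists. apply (HD x Hx).
  - rewrite Rmin_left, Rmax_right in Hc' by lra.
    destruct (HD c Hc') as [_ Hp]. nra.
Qed.
Lemma pp_nonneg z : 0 <= pp z.
Proof. unfold pp, Rmax; destruct (Rle_dec z 0); lra. Qed.
Lemma pp_pos z : 0 < z -> pp z = z.
Proof. unfold pp, Rmax; destruct (Rle_dec z 0); lra. Qed.
Lemma pp_neg z : z <= 0 -> pp z = 0.
Proof. unfold pp, Rmax; destruct (Rle_dec z 0); lra. Qed.

Lemma comparison (u1 u2 du1 du2 : R -> R) (L : R) :
 0 <= L -> u1 0 <= 0 -> u2 0 <= 0 ->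
 (forall eps, 0 < eps -> at_right 0 (fun s => Rabs (u1 s - u1 0) < eps /\ Rabs (u2 s - u2 0) < eps)) ->
 (forall t, 0 < t -> is_derive u1 t (du1 t) /\ is_derive u2 t (du2 t)) ->
 (forall t, 0 < t -> 0 < u1 t -> du1 t <= L * (u1 t + pp (u2 t))) ->
 (forall t, 0 < t -> 0 < u2 t -> du2 t <= L * (u2 t + pp (u1 t))) ->
 forall t, 0 <= t -> u1 t <= 0 /\ u2 t <= 0.
Proof.
  intros HL H10 H20 Hc Hd Hb1 Hb2.
  set (g := fun t => (pp (u1 t) * pp (u1 t) + pp (u2 t) * pp (u2 t)) * exp (- (4 * L) * t)).
  assert (Hg : forall t, 0 < t -> g t <= 0).
  { apply lemmaA.
    - intros t Ht. destruct (Hd t Ht) as [Hu1 Hu2].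
      assert (E1 : is_derive (fun t => pp (u1 t) * pp (u1 t)) t (du1 t * (2 * pp (u1 t))))
        by exact (is_derive_comp (fun z => pp z * pp z) u1 t _ _ (hq_derive _) Hu1).
      assert (E2 : is_derive (fun t => pp (u2 t) * pp (u2 t)) t (du2 t * (2 * pp (u2 t))))
        by exact (is_derive_comp (fun z => pp z * pp z) u2 t _ _ (hq_derive _) Hu2).
      assert (E3 : is_derive (fun t => exp (- (4 * L) * t)) t (- (4 * L) * exp (- (4 * L) * t))).
      { auto_derive; [auto| ring]. }
      pose proof (is_derive_plus _ _ _ _ _ E1 E2) as E12.
      pose proof (is_derive_mult _ _ _ _ _ E12 E3 Rmult_comm) as E.
      eexists. split; [exact E|].
      unfold plus, mult; simpl.
      set (e := exp (- (4 * L) * t)).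
      assert (He : 0 < e) by apply exp_pos.
      set (p1 := pp (u1 t)). set (p2 := pp (u2 t)).
      assert (Hp1 : 0 <= p1) by apply pp_nonneg.
      assert (Hp2 : 0 <= p2) by apply pp_nonneg.
      assert (K1 : p1 * du1 t <= L * p1 * (p1 + p2)).
      { destruct (Rle_dec (u1 t) 0).
        - unfold p1; rewrite pp_neg by auto; lra.
        - unfold p1, p2; rewrite pp_pos by lra. specialize (Hb1 t Ht ltac:(lra)). nra. }
      assert (K2 : p2 * du2 t <= L * p2 * (p1 + p2)).
      { destruct (Rle_dec (u2 t) 0).
        - unfold p2; rewrite pp_neg by auto; lra.
        - unfold p1, p2; rewrite (pp_pos (u2 t)) by lra. specialize (Hb2 t Ht ltac:(lra)). nra. }
      assert (K3 : du1 t * (2 * p1) + du2 t * (2 * p2) - 4 * L * (p1 * p1 + p2 * p2) <= 0).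
      { assert (0 <= L * ((p1 - p2) * (p1 - p2))) by (apply Rmult_le_pos; [lra| apply Rle_0_sqr]). lra. }
      nra.
    - intros eps Heps.
      set (eta := Rmin 1 (eps / 4)).
      assert (Heta : 0 < eta) by (unfold eta, Rmin; destruct (Rle_dec _ _); lra).
      assert (Heta1 : eta <= 1) by (unfold eta, Rmin; destruct (Rle_dec _ _); lra).
      assert (Heta2 : eta <= eps / 4) by (unfold eta, Rmin; destruct (Rle_dec _ _); lra).
      specialize (Hc eta Heta). unfold at_right, within in *.
      eapply filter_imp; [|exact Hc]. intros s Hs Hs0. destruct (Hs Hs0) as [Hs1 Hs2].
      unfold g.
      assert (Hexp : exp (- (4 * L) * s) <= 1).
      { rewrite <- exp_0. destruct (Req_dec (- (4 * L) * s) 0) as [->|]; [lra|].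
        left. apply exp_increasing. nra. }
      assert (Hexp0 : 0 < exp (- (4 * L) * s)) by apply exp_pos.
      assert (Q1 : pp (u1 s) <= Rabs (u1 s - u1 0)).
      { destruct (Rle_dec (u1 s) 0); [rewrite pp_neg by auto; apply Rabs_pos|rewrite pp_pos by lra; split_Rabs; lra]. }
      assert (Q2 : pp (u2 s) <= Rabs (u2 s - u2 0)).
      { destruct (Rle_dec (u2 s) 0); [rewrite pp_neg by auto; apply Rabs_pos|rewrite pp_pos by lra; split_Rabs; lra]. }
      pose proof (pp_nonneg (u1 s)). pose proof (pp_nonneg (u2 s)).
      assert (W : pp (u1 s) * pp (u1 s) + pp (u2 s) * pp (u2 s) < eps / 2) by nra.
      nra. }
  intros t Ht.
  destruct (Req_dec t 0) as [->|Ht0]; [auto|].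
  specialize (Hg t ltac:(lra)). unfold g in Hg.
  assert (He : 0 < exp (- (4 * L) * t)) by apply exp_pos.
  pose proof (pp_nonneg (u1 t)). pose proof (pp_nonneg (u2 t)).
  assert (W : pp (u1 t) * pp (u1 t) + pp (u2 t) * pp (u2 t) <= 0) by nra.
  split.
  - destruct (Rle_dec (u1 t) 0); auto. rewrite pp_pos in W by lra. nra.
  - destruct (Rle_dec (u2 t) 0); auto. rewrite (pp_pos (u2 t)) in W by lra. nra.
Qed.
Theorem proposition1
  (B1 C1 F1 B2 C2 F2 phi alpha r01 r02 : R)
  (tau1 tau2 : R -> R) (r1 r2 : R -> R -> R)
  (* positivity of parameters, C_i < B_i, phi > 0 *)
  (hB1 : 0 < B1) (hC1 : 0 < C1) (hF1 : 0 < F1) (hCB1 : C1 < B1)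
  (hB2 : 0 < B2) (hC2 : 0 < C2) (hF2 : 0 < F2) (hCB2 : C2 < B2)
  (hphi : 0 < phi)
  (* (A1) *)
  (A1 : phi < F1 + F2)
  (* (A2)-(A3) *)
  (halpha : 0 < alpha <= 1)
  (hr01 : 0 <= r01) (hr02 : 0 <= r02) (hr0 : r01 + r02 = 1)
  (htau1 : C1_strict_incr B1 tau1) (htau2 : C1_strict_incr B2 tau2)
  (hr_range : forall x1 x2, in_Omega B1 B2 x1 x2 ->
      0 <= r1 (tau1 x1) (tau2 x2) <= 1 /\ 0 <= r2 (tau1 x1) (tau2 x2) <= 1 /\
      r1 (tau1 x1) (tau2 x2) + r2 (tau1 x1) (tau2 x2) = 1)
  (hr1_lip : lipschitz_on_Omega B1 B2 (fun x1 x2 => r1 (tau1 x1) (tau2 x2)))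
  (hr2_lip : lipschitz_on_Omega B1 B2 (fun x1 x2 => r2 (tau1 x1) (tau2 x2)))
  (hr1_C1 : C1_on_Omega B1 B2 (fun x1 x2 => r1 (tau1 x1) (tau2 x2)))
  (hr2_C1 : C1_on_Omega B1 B2 (fun x1 x2 => r2 (tau1 x1) (tau2 x2)))
  (* (A4): dR_1/dtau_2 > 0 and dR_2/dtau_1 > 0 on Omega *)
  (A4_1 : forall x1 x2, in_Omega B1 B2 x1 x2 ->
      exists d, is_derive (fun s => (1 - alpha) * r01 + alpha * r1 (tau1 x1) s)
                  (tau2 x2) d /\ 0 < d)
  (A4_2 : forall x1 x2, in_Omega B1 B2 x1 x2 ->
      exists d, is_derive (fun s => (1 - alpha) * r02 + alpha * r2 s (tau2 x2))
                  (tau1 x1) d /\ 0 < d)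
  (* (A5) *)
  (A5_1 : F1 > (1 - alpha) * phi * r01)
  (A5_2 : F2 > (1 - alpha) * phi * r02)
  (* (A6): phi < E_i = v_i B_i *)
  (A6_1 : phi < F1 / C1 * B1)
  (A6_2 : phi < F2 / C2 * B2)
  (* two solutions with ordered initial data *)
  (a1 a2 b1 b2 : R) (x1 x2 y1 y2 : R -> R)
  (ha : in_Omega B1 B2 a1 a2) (hb : in_Omega B1 B2 b1 b2)
  (hab : a1 <= b1 /\ a2 <= b2)
  (hx : is_solution B1 C1 F1 B2 C2 F2 phi alpha r01 r02 r1 r2 tau1 tau2 a1 a2 x1 x2)
  (hy : is_solution B1 C1 F1 B2 C2 F2 phi alpha r01 r02 r1 r2 tau1 tau2 b1 b2 y1 y2) :
  forall t, 0 <= t -> x1 t <= y1 t /\ x2 t <= y2 t.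
Proof.
  destruct hx as [hx10 [hx20 [hxO [hxc1 [hxc2 hxd]]]]].
  destruct hy as [hy10 [hy20 [hyO [hyc1 [hyc2 hyd]]]]].
  destruct hr1_lip as [Lr1 [HLr1 Hlip1]].
  destruct hr2_lip as [Lr2 [HLr2 Hlip2]].
  assert (Hmono1 : forall a o o', 0 <= a <= B1 -> 0 <= o -> o <= o' -> o' <= B2 ->
            r1 (tau1 a) (tau2 o) <= r1 (tau1 a) (tau2 o')).
  { intros a o o' Ha H0 H1 H2.
    pose proof (incr_from_deriv (fun s => (1 - alpha) * r01 + alpha * r1 (tau1 a) s) tau2 B2 htau2)
      as Hi.
    assert (Hx : (1 - alpha) * r01 + alpha * r1 (tau1 a) (tau2 o) <=
                 (1 - alpha) * r01 + alpha * r1 (tau1 a) (tau2 o')).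
    { apply Hi; auto. intros z Hz. apply A4_1. unfold in_Omega; lra. }
    apply Rmult_le_reg_l with alpha; lra. }
  assert (Hmono2 : forall a o o', 0 <= a <= B2 -> 0 <= o -> o <= o' -> o' <= B1 ->
            (fun a o => r2 (tau1 o) (tau2 a)) a o <= (fun a o => r2 (tau1 o) (tau2 a)) a o').
  { intros a o o' Ha H0 H1 H2. simpl.
    pose proof (incr_from_deriv (fun s => (1 - alpha) * r02 + alpha * r2 s (tau2 a)) tau1 B1 htau1)
      as Hi.
    assert (Hx : (1 - alpha) * r02 + alpha * r2 (tau1 o) (tau2 a) <=
                 (1 - alpha) * r02 + alpha * r2 (tau1 o') (tau2 a)).
    { apply Hi; auto. intros z Hz. apply A4_2. unfold in_Omega; lra. }
    apply Rmult_le_reg_l with alpha; lra. }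
  assert (Hl1 : forall a o a' o', 0 <= a <= B1 -> 0 <= o <= B2 -> 0 <= a' <= B1 -> 0 <= o' <= B2 ->
    Rabs ((fun a o => r1 (tau1 a) (tau2 o)) a o - (fun a o => r1 (tau1 a) (tau2 o)) a' o')
      <= Lr1 * (Rabs (a - a') + Rabs (o - o'))).
  { intros. simpl. apply Hlip1; unfold in_Omega; auto. }
  assert (Hl2 : forall a o a' o', 0 <= a <= B2 -> 0 <= o <= B1 -> 0 <= a' <= B2 -> 0 <= o' <= B1 ->
    Rabs ((fun a o => r2 (tau1 o) (tau2 a)) a o - (fun a o => r2 (tau1 o) (tau2 a)) a' o')
      <= Lr2 * (Rabs (a - a') + Rabs (o - o'))).
  { intros. simpl. rewrite Rplus_comm. apply Hlip2; unfold in_Omega; auto. }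
  set (L1 := phi * alpha * Lr1 + F1 / (B1 - C1) + F1 / C1).
  set (L2 := phi * alpha * Lr2 + F2 / (B2 - C2) + F2 / C2).
  assert (HL1 : 0 <= L1).
  { unfold L1. assert (0 < F1 / (B1 - C1)) by (apply Rdiv_lt_0_compat; lra).
    assert (0 < F1 / C1) by (apply Rdiv_lt_0_compat; lra).
    assert (0 <= phi * alpha * Lr1) by (apply Rmult_le_pos; nra). lra. }
  assert (HL2 : 0 <= L2).
  { unfold L2. assert (0 < F2 / (B2 - C2)) by (apply Rdiv_lt_0_compat; lra).
    assert (0 < F2 / C2) by (apply Rdiv_lt_0_compat; lra).
    assert (0 <= phi * alpha * Lr2) by (apply Rmult_le_pos; nra). lra. }
  cut (forall t, 0 <= t -> x1 t - y1 t <= 0 /\ x2 t - y2 t <= 0).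
  { intros H t Ht; specialize (H t Ht); lra. }
  apply (comparison (fun t => x1 t - y1 t) (fun t => x2 t - y2 t)
    (fun t => rhs phi alpha r01 r1 tau1 tau2 F1 B1 C1 (x1 t) (x2 t) (x1 t)
            - rhs phi alpha r01 r1 tau1 tau2 F1 B1 C1 (y1 t) (y2 t) (y1 t))
    (fun t => rhs phi alpha r02 r2 tau1 tau2 F2 B2 C2 (x1 t) (x2 t) (x2 t)
            - rhs phi alpha r02 r2 tau1 tau2 F2 B2 C2 (y1 t) (y2 t) (y2 t))
    (L1 + L2)).
  - lra.
  - simpl; lra.
  - simpl; lra.
  - intros eps Heps.
    pose (e2 := mkposreal (eps / 2) ltac:(lra)).
    pose proof (proj1 (filterlim_locally _ _) hxc1 e2) as F1'.
    pose proof (proj1 (filterlim_locally _ _) hxc2 e2) as F2'.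
    pose proof (proj1 (filterlim_locally _ _) hyc1 e2) as F3'.
    pose proof (proj1 (filterlim_locally _ _) hyc2 e2) as F4'.
    pose proof (filter_and _ _ (filter_and _ _ F1' F2') (filter_and _ _ F3' F4')) as Fa.
    eapply filter_imp; [|exact Fa]. simpl.
    intros s [[G1 G2] [G3 G4]].
    apply ballR in G1; apply ballR in G2; apply ballR in G3; apply ballR in G4.
    simpl in *. split; split_Rabs; lra.
  - intros t Ht. destruct (hxd t Ht) as [D1 D2]. destruct (hyd t Ht) as [D3 D4].
    split; [exact (is_derive_minus _ _ _ _ _ D1 D3)| exact (is_derive_minus _ _ _ _ _ D2 D4)].
  - intros t Ht Hp. simpl in Hp |- *.
    destruct (hxO t ltac:(lra)) as [Ox1 Ox2]. destruct (hyO t ltac:(lra)) as [Oy1 Oy2].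
    unfold rhs, routing.
    pose proof (key F1 B1 C1 phi alpha r01 (fun a o => r1 (tau1 a) (tau2 o)) Lr1 B2
      (x1 t) (y1 t) (x2 t) (y2 t) hF1 hC1 hCB1 hphi (proj1 halpha) HLr1 Hmono1 Hl1
      Ox1 Oy1 Ox2 Oy2 ltac:(lra)) as K.
    simpl in K. fold L1 in K.
    pose proof (pp_nonneg (x2 t - y2 t)).
    assert (L1 * (x1 t - y1 t + pp (x2 t - y2 t)) <= (L1 + L2) * (x1 t - y1 t + pp (x2 t - y2 t))).
    { apply Rmult_le_compat_r; lra. }
    lra.
  - intros t Ht Hp. simpl in Hp |- *.
    destruct (hxO t ltac:(lra)) as [Ox1 Ox2]. destruct (hyO t ltac:(lra)) as [Oy1 Oy2].
    unfold rhs, routing.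
    pose proof (key F2 B2 C2 phi alpha r02 (fun a o => r2 (tau1 o) (tau2 a)) Lr2 B1
      (x2 t) (y2 t) (x1 t) (y1 t) hF2 hC2 hCB2 hphi (proj1 halpha) HLr2 Hmono2 Hl2
      Ox2 Oy2 Ox1 Oy1 ltac:(lra)) as K.
    simpl in K. fold L2 in K.
    pose proof (pp_nonneg (x1 t - y1 t)).
    assert (L2 * (x2 t - y2 t + pp (x1 t - y1 t)) <= (L1 + L2) * (x2 t - y2 t + pp (x1 t - y1 t))).
    { apply Rmult_le_compat_r; lra. }
    lra.
Qed.
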